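(* Let $A$ and $B$ be C$^*$-algebras, where $A$ is unital, simple and infinite. Let $T:A\to B$ be a linear map. Then $T$ is a $^*$-homomorphism if and only if $T$ is a $^*$-homomorphism at the unit $1$ of $A$.
   Context: A map $T:A\to B$ between C$^*$-algebras is a $^*$-homomorphism at $z\in A$ if for all $a,b\in A$ with $ab^*=z$ one has $T(ab^* )=T(a)T(b)^*=T(z)$, and for all $c,d\in A$ with $c^*d=z$ one has $T(c^*d)=T(c)^*T(d)=T(z)$. A unital C$^*$-algebra is infinite if its unit is not a finite projection (equivalently, it contains a projection that is Murray–von Neumann equivalent to a proper subprojection of itself). Simple means $A$ has no nontrivial norm-closed two-sided ideals. *)

(* Defs.v *)
From HB Require Import structures.
From mathcomp Require Import all_boot all_order all_algebra.
From mathcomp Require Import complex.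
From mathcomp Require Import all_classical all_reals topology normedtype.
Set Implicit Arguments. Unset Strict Implicit. Unset Printing Implicit Defensive.
Import Order.TTheory GRing.Theory Num.Theory.
Import numFieldNormedType.Exports.
Local Open Scope ring_scope.
Local Open Scope classical_set_scope.

Section CStar.
Variable R : realType.
Local Notation C := (complex R).

Definition is_cstar_algebra (V : completeNormedModType C)
    (mul : V -> V -> V) (star : V -> V) : Prop :=
  (forall x y z, mul x (mul y z) = mul (mul x y) z) /\
      (forall (a : C) x y z, mul (a *: x + y) z = a *: mul x z + mul y z) /\
      (forall (a : C) x y z, mul z (a *: x + y) = a *: mul z x + mul z y) /\
      (forall (a : C) x y, star (a *: x + y) = (Num.conj a) *: star x + star y) /\
      (forall x, star (star x) = x) /\
      (forall x y, star (mul x y) = mul (star y) (star x)) /\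
      (forall x y, `|mul x y| <= `|x| * `|y|) /\
      (forall x, `|mul (star x) x| = `|x| ^+ 2).

Variable V : completeNormedModType C.
Variables (mul : V -> V -> V) (star : V -> V).

Definition is_unit (one : V) : Prop := forall x, mul one x = x /\ mul x one = x.

Definition closed_ideal (I : set V) : Prop :=
  [/\ I 0,
      (forall x y, I x -> I y -> I (x + y)),
      (forall (a : C) x, I x -> I (a *: x)),
      (forall x y, I y -> I (mul x y) /\ I (mul y x))
    & closed I].

Definition simple_alg : Prop :=
  forall I : set V, closed_ideal I -> I = [set 0] \/ I = setT.

Definition projection (p : V) : Prop := mul p p = p /\ star p = p.

Definition mvn_equiv (p q : V) : Prop :=
  exists v, mul (star v) v = p /\ mul v (star v) = q.

Definition subproj (q p : V) : Prop := mul q p = q.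

Definition finite_proj (p : V) : Prop :=
  forall q, projection q -> subproj q p -> mvn_equiv p q -> q = p.

Definition infinite_alg (one : V) : Prop := ~ finite_proj one.

End CStar.

Section Hom.
Variable R : realType.
Local Notation C := (complex R).
Variables (VA VB : completeNormedModType C).
Variables (mulA : VA -> VA -> VA) (starA : VA -> VA).
Variables (mulB : VB -> VB -> VB) (starB : VB -> VB).

Definition is_linear_map (T : VA -> VB) : Prop :=
  forall (a : C) x y, T (a *: x + y) = a *: T x + T y.

Definition star_hom (T : VA -> VB) : Prop :=
  is_linear_map T /\
  (forall x y, T (mulA x y) = mulB (T x) (T y)) /\
  (forall x, T (starA x) = starB (T x)).

Definition star_hom_at (T : VA -> VB) (z : VA) : Prop :=
  (forall a b, mulA a (starA b) = z ->
     T (mulA a (starA b)) = mulB (T a) (starB (T b)) /\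
     mulB (T a) (starB (T b)) = T z) /\
  (forall c d, mulA (starA c) d = z ->
     T (mulA (starA c) d) = mulB (starB (T c)) (T d) /\
     mulB (starB (T c)) (T d) = T z).
End Hom.

(* Main.v *)
Require Import Defs.
From HB Require Import structures.
From mathcomp Require Import all_boot all_order all_algebra.
From mathcomp Require Import complex.
From mathcomp Require Import all_classical all_reals topology normedtype.
From mathcomp Require Import sequences.
Set Implicit Arguments. Unset Strict Implicit. Unset Printing Implicit Defensive.
Import Order.TTheory GRing.Theory Num.Theory.

Module Aux1.
Local Open Scope ring_scope.

Lemma self_add0 (V : zmodType) (x : V) : x = x + x -> x = 0.
Proof. by move=> h; apply: (addrI x); rewrite addr0 -h. Qed.

Section Bilin.
Variable R : realType.
Local Notation C := (complex R).
Variable V : lmodType C.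
Variable mul : V -> V -> V.
Hypothesis mDl : forall (a : C) x y z, mul (a *: x + y) z = a *: mul x z + mul y z.
Hypothesis mDr : forall (a : C) x y z, mul z (a *: x + y) = a *: mul z x + mul z y.

Lemma bl_Dl x y z : mul (x + y) z = mul x z + mul y z.
Proof. by have := mDl 1 x y z; rewrite !scale1r. Qed.
Lemma bl_Dr x y z : mul z (x + y) = mul z x + mul z y.
Proof. by have := mDr 1 x y z; rewrite !scale1r. Qed.
Lemma bl_0l z : mul 0 z = 0.
Proof. by have := bl_Dl 0 0 z; rewrite addr0; apply: self_add0. Qed.
Lemma bl_0r z : mul z 0 = 0.
Proof. by have := bl_Dr 0 0 z; rewrite addr0; apply: self_add0. Qed.
Lemma bl_Zl a x z : mul (a *: x) z = a *: mul x z.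
Proof. by have := mDl a x 0 z; rewrite addr0 bl_0l addr0. Qed.
Lemma bl_Zr a x z : mul z (a *: x) = a *: mul z x.
Proof. by have := mDr a x 0 z; rewrite addr0 bl_0r addr0. Qed.
Lemma bl_Nl x z : mul (- x) z = - mul x z.
Proof. by rewrite -scaleN1r bl_Zl scaleN1r. Qed.
Lemma bl_Nr x z : mul z (- x) = - mul z x.
Proof. by rewrite -scaleN1r bl_Zr scaleN1r. Qed.
Lemma bl_Bl x y z : mul (x - y) z = mul x z - mul y z.
Proof. by rewrite bl_Dl bl_Nl. Qed.
Lemma bl_Br x y z : mul z (x - y) = mul z x - mul z y.
Proof. by rewrite bl_Dr bl_Nr. Qed.
End Bilin.

Section Lin.
Variable R : realType.
Local Notation C := (complex R).
Variables V W : lmodType C.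
Variable f : V -> W.
Hypothesis hf : forall (a : C) x y, f (a *: x + y) = a *: f x + f y.
Lemma ln_D x y : f (x + y) = f x + f y.
Proof. by have := hf 1 x y; rewrite !scale1r. Qed.
Lemma ln_0 : f 0 = 0.
Proof. by have := ln_D 0 0; rewrite addr0; apply: self_add0. Qed.
Lemma ln_Z a x : f (a *: x) = a *: f x.
Proof. by have := hf a x 0; rewrite addr0 ln_0 addr0. Qed.
Lemma ln_N x : f (- x) = - f x.
Proof. by rewrite -scaleN1r ln_Z scaleN1r. Qed.
Lemma ln_B x y : f (x - y) = f x - f y.
Proof. by rewrite ln_D ln_N. Qed.
End Lin.

Section Conj.
Variable R : realType.
Local Notation C := (complex R).
Variables V : lmodType C.
Variable f : V -> V.
Hypothesis hf : forall (a : C) x y, f (a *: x + y) = (Num.conj a) *: f x + f y.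
Lemma cj_D x y : f (x + y) = f x + f y.
Proof. by have := hf 1 x y; rewrite conjC1 !scale1r. Qed.
Lemma cj_0 : f 0 = 0.
Proof. by have := cj_D 0 0; rewrite addr0; apply: self_add0. Qed.
Lemma cj_N x : f (- x) = - f x.
Proof. by have := hf (-1) x 0; rewrite addr0 cj_0 addr0 scaleN1r rmorphN1 scaleN1r. Qed.
Lemma cj_B x y : f (x - y) = f x - f y.
Proof. by rewrite cj_D cj_N. Qed.
End Conj.

Lemma half_twice (R : realType) (V : lmodType (complex R)) (v : V) :
  v + v = 0 -> v = 0.
Proof.
move=> h; have : (2%:R : complex R) *: v = 0 by rewrite scaler_nat mulr2n.
move/eqP; rewrite scaler_eq0 => /orP[|/eqP //].
by rewrite pnatr_eq0.
Qed.

Lemma zmod_aux (V : zmodType) (a b c : V) :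
  a + (b + c) = 0 -> - a + (- b + c) = 0 -> (a + b) + (a + b) = 0.
Proof.
move=> h1 h2.
have : (a + b) + c = 0 by rewrite -addrA.
move/eqP; rewrite addrC addr_eq0 => /eqP hc.
move: h2; rewrite hc addrA -opprD -opprD => /eqP; rewrite oppr_eq0 => /eqP.
by [].
Qed.

End Aux1.
Import Aux1.

Module Aux2.
Local Open Scope ring_scope.

Section LemL.
Variable R : realType.
Local Notation C := (complex R).
Variables VA VB : lmodType C.
Variables (m : VA -> VA -> VA) (n : VB -> VB -> VB) (one : VA).
Local Notation "x ⋆ y" := (m x y) (at level 40, left associativity).
Hypothesis mA : forall x y z, m x (m y z) = m (m x y) z.
Hypothesis mDl : forall (a : C) x y z, m (a *: x + y) z = a *: m x z + m y z.
Hypothesis mDr : forall (a : C) x y z, m z (a *: x + y) = a *: m z x + m z y.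
Hypothesis m1l : forall x, m one x = x.
Hypothesis m1r : forall x, m x one = x.
Hypothesis nDl : forall (a : C) x y z, n (a *: x + y) z = a *: n x z + n y z.
Hypothesis nDr : forall (a : C) x y z, n z (a *: x + y) = a *: n z x + n z y.
Variables F G : VA -> VB.
Hypothesis hF : forall (a : C) x y, F (a *: x + y) = a *: F x + F y.
Hypothesis hG : forall (a : C) x y, G (a *: x + y) = a *: G x + G y.
Hypothesis hpair : forall x y, x ⋆ y = one -> n (F x) (G y) = F one.
Hypothesis hDI : forall b, exists g g' c c', g ⋆ g' = one /\ g' ⋆ g = one /\
   c ⋆ c' = one /\ c' ⋆ c = one /\ b = g - c.

Let FD := ln_D hF. Let FB := ln_B hF. Let F0 := ln_0 hF. Let FN := ln_N hF.
Let GD := ln_D hG. Let GB := ln_B hG. Let G0 := ln_0 hG. Let GN := ln_N hG.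
Let mDl' := bl_Dl mDl. Let mDr' := bl_Dr mDr. Let mBl := bl_Bl mDl. Let mBr := bl_Br mDr.
Let m0l := bl_0l mDl. Let m0r := bl_0r mDr. Let mNl := bl_Nl mDl. Let mNr := bl_Nr mDr.
Let nDl' := bl_Dl nDl. Let nDr' := bl_Dr nDr. Let nBl := bl_Bl nDl. Let nBr := bl_Br nDr.
Let n0l := bl_0l nDl. Let n0r := bl_0r nDr. Let nNl := bl_Nl nDl. Let nNr := bl_Nr nDr.

Lemma pert x y X Y Z : x ⋆ y = one -> X ⋆ y = 0 -> x ⋆ Y = 0 ->
  X ⋆ Y + x ⋆ Z = 0 -> X ⋆ Z = 0 -> n (F X) (G Y) + n (F x) (G Z) = 0.
Proof.
move=> h hX hY hXYZ hZ.
have e1 := hpair h.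
have e2 : n (F (x + X)) (G y) = F one.
  by apply: hpair; rewrite mDl' h hX addr0.
have e3 : n (F x) (G (y + Y)) = F one.
  by apply: hpair; rewrite mDr' h hY addr0.
have e4 : n (F (x + X)) (G (y + Y + Z)) = F one.
  apply: hpair; rewrite !mDl' !mDr' h hX hY hZ !addr0.
  by rewrite add0r -addrA [X in _ + X]addrC hXYZ addr0.
have e5 : n (F (x - X)) (G (y + Y - Z)) = F one.
  apply: hpair; rewrite !mBl !mBr !mDr' h hX hY hZ !addr0.
  by rewrite subr0 add0r -addrA -opprD [X in - X]addrC hXYZ subr0.
rewrite FD nDl' e1 in e2.
have {}e2 : n (F X) (G y) = 0 by apply: (addrI (F one)); rewrite addr0.
rewrite GD nDr' e1 in e3.
have {}e3 : n (F x) (G Y) = 0 by apply: (addrI (F one)); rewrite addr0.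
rewrite FD !GD !nDl' !nDr' e1 e2 e3 !addr0 add0r -addrA in e4.
rewrite FB !GB GD !nBl !nBr !nDr' e1 e2 e3 !addr0 in e5.

have e4' : n (F x) (G Z) + (n (F X) (G Y) + n (F X) (G Z)) = 0.
  by apply: (addrI (F one)); rewrite addr0 e4.
have e5' : - n (F x) (G Z) + (- n (F X) (G Y) + n (F X) (G Z)) = 0.
  apply: (addrI (F one)); rewrite addr0 -[X in _ = X]e5 add0r opprB addrA.
  by congr (_ + _); rewrite addrC.
by rewrite addrC; apply: half_twice; apply: (zmod_aux e4' e5').
Qed.

Lemma K2 z y x0 : x0 ⋆ y = one -> z ⋆ y = 0 -> forall b, n (F z) (G (y ⋆ b)) = 0.
Proof.
move=> hxy hzy.
have key : forall g g', g ⋆ g' = one -> g' ⋆ g = one -> n (F z) (G (y ⋆ g)) = 0.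
  move=> g g' h1 h2.
  have p1 : (g' ⋆ x0) ⋆ (y ⋆ g) = one by rewrite mA -(mA g' x0 y) hxy m1r h2.
  have p2 : (g' ⋆ x0 + z) ⋆ (y ⋆ g) = one by rewrite mDl' p1 mA hzy m0l addr0.
  have := hpair p2; rewrite FD nDl' (hpair p1) => h.
  by apply: (addrI (F one)); rewrite addr0.
move=> b; case: (hDI b) => g [g' [c [c' [h1 [h2 [h3 [h4 ->]]]]]]].
by rewrite mBr GB nBr (key g g') // (key c c') // subr0.
Qed.

Lemma K3 x z y0 : x ⋆ y0 = one -> x ⋆ z = 0 -> forall c, n (F (c ⋆ x)) (G z) = 0.
Proof.
move=> hxy hxz.
have key : forall g g', g ⋆ g' = one -> g' ⋆ g = one -> n (F (g ⋆ x)) (G z) = 0.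
  move=> g g' h1 h2.
  have p1 : (g ⋆ x) ⋆ (y0 ⋆ g') = one by rewrite mA -(mA g x y0) hxy m1r h1.
  have p2 : (g ⋆ x) ⋆ (y0 ⋆ g' + z) = one by rewrite mDr' p1 -mA hxz m0r addr0.
  have := hpair p2; rewrite GD nDr' (hpair p1) => h.
  by apply: (addrI (F one)); rewrite addr0.
move=> b; case: (hDI b) => g [g' [c [c' [h1 [h2 [h3 [h4 ->]]]]]]].
by rewrite mBl FB nBl (key g g') // (key c c') // subr0.
Qed.

Variables s s' t t' : VA.
Hypothesis hss : s' ⋆ s = one.
Hypothesis htt : t' ⋆ t = one.
Hypothesis hst : s' ⋆ t = 0.
Hypothesis hts : t' ⋆ s = 0.

Let P c := n (F s') (G (s ⋆ c)).

Lemma S1 c d : n (F (c ⋆ t')) (G (t ⋆ d)) = P (c ⋆ d).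
Proof.
have h1 : c ⋆ t' ⋆ s = 0 by rewrite -mA hts m0r.
have h2 : s' ⋆ (t ⋆ d) = 0 by rewrite mA hst m0l.
have h3 : c ⋆ t' ⋆ (t ⋆ d) + s' ⋆ - (s ⋆ (c ⋆ d)) = 0.
  by rewrite mNr !mA hss m1l -(mA c t' t) htt m1r subrr.
have h4 : c ⋆ t' ⋆ - (s ⋆ (c ⋆ d)) = 0.
  by rewrite mNr !mA -(mA c t' s) hts m0r !m0l oppr0.
have := @pert s' s (c ⋆ t') (t ⋆ d) (- (s ⋆ (c ⋆ d))) hss h1 h2 h3 h4.
by rewrite GN nNr => /subr0_eq.
Qed.

Lemma S2 c d : n (F (c ⋆ s')) (G (s ⋆ d)) = n (F t') (G (t ⋆ (c ⋆ d))).
Proof.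
have h1 : c ⋆ s' ⋆ t = 0 by rewrite -mA hst m0r.
have h2 : t' ⋆ (s ⋆ d) = 0 by rewrite mA hts m0l.
have h3 : c ⋆ s' ⋆ (s ⋆ d) + t' ⋆ - (t ⋆ (c ⋆ d)) = 0.
  by rewrite mNr !mA htt m1l -(mA c s' s) hss m1r subrr.
have h4 : c ⋆ s' ⋆ - (t ⋆ (c ⋆ d)) = 0.
  by rewrite mNr !mA -(mA c s' t) hst m0r !m0l oppr0.
have := @pert t' t (c ⋆ s') (s ⋆ d) (- (t ⋆ (c ⋆ d))) htt h1 h2 h3 h4.
by rewrite GN nNr => /subr0_eq.
Qed.

Lemma S2' c d : n (F (c ⋆ s')) (G (s ⋆ d)) = P (c ⋆ d).
Proof. by have := S1 one (c ⋆ d); rewrite !m1l S2 => ->. Qed.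

Lemma S4 c w : n (F (c ⋆ s')) (G w) = P (c ⋆ (s' ⋆ w)).
Proof.
have hz : s' ⋆ (w - s ⋆ (s' ⋆ w)) = 0 by rewrite mBr mA hss m1l subrr.
have := K3 hss hz c; rewrite GB nBr S2' => h.
by apply: subr0_eq.
Qed.

Lemma S6 a b : n (F (a ⋆ (one - s ⋆ s'))) (G ((one - s ⋆ s') ⋆ b)) =
   P (a ⋆ (one - s ⋆ s') ⋆ ((one - s ⋆ s') ⋆ b)).
Proof.
set E := one - s ⋆ s'.
have hEs : E ⋆ s = 0 by rewrite mBl m1l -mA hss m1r subrr.
have hsE : s' ⋆ E = 0 by rewrite mBr m1r mA hss m1l subrr.
have hX : a ⋆ E ⋆ s = 0 by rewrite -mA hEs m0r.
have hY : s' ⋆ (E ⋆ b) = 0 by rewrite mA hsE m0l.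
have h3 : a ⋆ E ⋆ (E ⋆ b) + s' ⋆ - (s ⋆ (a ⋆ E ⋆ (E ⋆ b))) = 0.
  by rewrite mNr (mA s' s) hss m1l subrr.
have h4 : a ⋆ E ⋆ - (s ⋆ (a ⋆ E ⋆ (E ⋆ b))) = 0.
  by rewrite mNr (mA (a ⋆ E) s) hX m0l oppr0.
have := @pert s' s (a ⋆ E) (E ⋆ b) (- (s ⋆ (a ⋆ E ⋆ (E ⋆ b)))) hss hX hY h3 h4.
by rewrite GN nNr => /subr0_eq.
Qed.

Lemma Lmain a b : n (F a) (G b) = P (a ⋆ b).
Proof.
set E := one - s ⋆ s'.
have ha : a = a ⋆ s ⋆ s' + a ⋆ E by rewrite mBr m1r mA addrC subrK.
have hb : b = s ⋆ (s' ⋆ b) + E ⋆ b by rewrite mBl m1l mA addrC subrK.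
have hEs : E ⋆ s = 0 by rewrite mBl m1l -mA hss m1r subrr.
have hsE : s' ⋆ E = 0 by rewrite mBr m1r mA hss m1l subrr.
have hEE : E ⋆ E = E by rewrite {1}/E mBl m1l -mA hsE m0r subr0.
have hz : a ⋆ E ⋆ s = 0 by rewrite -mA hEs m0r.
have e1 : n (F a) (G b) = n (F (a ⋆ s ⋆ s')) (G b) + n (F (a ⋆ E)) (G b).
  by rewrite -nDl' -FD -ha.
have e2 : n (F (a ⋆ E)) (G b) =
   n (F (a ⋆ E)) (G (s ⋆ (s' ⋆ b))) + n (F (a ⋆ E)) (G (E ⋆ b)).
  by rewrite -nDr' -GD -hb.
rewrite e1 e2 S4 (K2 hss hz) add0r S6 -/E.
rewrite /P.
rewrite -nDr' -GD -mDr'; congr (n _ (G (m s _))).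
rewrite !mA -(mA a E E) hEE -(mA a s s') -mDl' -mDr'.
by rewrite [X in m a X]addrC subrK m1r.
Qed.

Lemma Lfinal a b : n (F a) (G b) = n (F one) (G (a ⋆ b)) /\ n (F a) (G b) = n (F (a ⋆ b)) (G one).
Proof. by rewrite !Lmain m1l m1r. Qed.
End LemL.

End Aux2.
Import Aux2.

Module Aux3.
Import numFieldNormedType.Exports.
Local Open Scope ring_scope.
Local Open Scope classical_set_scope.
Local Open Scope complex_scope.

Lemma pos_real (R : realType) (z : complex R) : 0 <= z -> z = (complex.Re z)%:C.
Proof. by case: z => a b; rewrite lecE /= => /andP[/eqP -> _]. Qed.

Lemma pos_Re (R : realType) (z : complex R) : 0 < z -> 0 < complex.Re z.
Proof. by case: z => a b; rewrite ltcE /= => /andP[_ ->]. Qed.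

Section Neumann.
Variable R : realType.
Local Notation C := (complex R).
Variable V : completeNormedModType C.
Variables (m : V -> V -> V) (one : V).
Hypothesis mA : forall x y z, m x (m y z) = m (m x y) z.
Hypothesis mDl : forall (a : C) x y z, m (a *: x + y) z = a *: m x z + m y z.
Hypothesis mDr : forall (a : C) x y z, m z (a *: x + y) = a *: m z x + m z y.
Hypothesis m1l : forall x, m one x = x.
Hypothesis m1r : forall x, m x one = x.
Hypothesis msub : forall x y, `|m x y| <= `|x| * `|y|.

Lemma nrm_real (v : V) : `|v| = (complex.Re `|v|)%:C.
Proof. exact: pos_real. Qed.

Lemma mcontl c (f : nat -> V) l : f @ \oo --> l -> (fun k => m c (f k)) @ \oo --> m c l.
Proof.
move=> /cvgrPdist_lt hf; apply/cvgrPdist_lt => eps e0.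
have k0 : 0 < `|c| + 1 := ltr_wpDl (normr_ge0 c) ltr01.
have e1 : 0 < eps / (`|c| + 1) by rewrite divr_gt0.
apply: filterS (hf _ e1) => k hk.
rewrite -(bl_Br mDr); apply: le_lt_trans (msub _ _) _.
apply: (@le_lt_trans _ _ ((`|c| + 1) * `|l - f k|)).
  by rewrite ler_wpM2r // lerDl ler01.
by rewrite mulrC -ltr_pdivlMr.
Qed.

Lemma mcontr c (f : nat -> V) l : f @ \oo --> l -> (fun k => m (f k) c) @ \oo --> m l c.
Proof.
move=> /cvgrPdist_lt hf; apply/cvgrPdist_lt => eps e0.
have k0 : 0 < `|c| + 1 := ltr_wpDl (normr_ge0 c) ltr01.
have e1 : 0 < eps / (`|c| + 1) by rewrite divr_gt0.
apply: filterS (hf _ e1) => k hk.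
rewrite -(bl_Bl mDl); apply: le_lt_trans (msub _ _) _.
apply: (@le_lt_trans _ _ (`|l - f k| * (`|c| + 1))).
  by rewrite ler_wpM2l // lerDl ler01.
by rewrite -ltr_pdivlMr.
Qed.

Lemma neumann d : `|d| < 1 -> exists w, m (one - d) w = one /\ m w (one - d) = one.
Proof.
move=> hd.
pose pw k := iter k (m d) one.
have pwS' : forall k, pw k.+1 = m (pw k) d.
  elim=> [|k IH]; first by rewrite /pw /= m1r m1l.
  transitivity (m d (pw k.+1)); first by [].
  by rewrite {1}IH mA.
have bound : forall k, `|pw k| <= `|one| * `|d| ^+ k.
  elim=> [|k IH]; first by rewrite expr0 mulr1.
  apply: (@le_trans _ _ (`|d| * `|pw k|)); first exact: msub.
  by rewrite exprS mulrCA; apply: ler_wpM2l => //; exact: IH.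
set r := complex.Re `|d|; set c0 := complex.Re `|one|.
have hr : `|d| = r%:C := nrm_real d.
have hc : `|one| = c0%:C := nrm_real one.
have r0 : 0 <= r by rewrite -ler0c -hr.
have r1 : r < 1 by move: hd; rewrite hr ltcE /= => /andP[_].
have hg : cvgn (series (geometric c0 r)).
  by apply/cvg_ex; exists (c0 / (1 - r)); apply: cvg_geometric_series; rewrite ger0_norm.
have hcg : cauchy (series (geometric c0 r) @ \oo) by apply/cauchy_cvgP.
have hcv : cvgn (series pw).
  apply/cauchy_cvgP/cauchy_seriesP => e e0.
  have := (cauchy_seriesP (geometric c0 r)).1 hcg (complex.Re e) (pos_Re e0).
  apply: filterS => nn hn.
  rewrite (pos_real (ltW e0)).
  apply: le_lt_trans (ler_norm_sum _ _ _) _.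
  apply: (@le_lt_trans _ _ (\sum_(nn.1 <= k < nn.2) geometric c0 r k)%:C).
    rewrite rmorph_sum; apply: ler_sum => k _.
    rewrite /= rmorphM rmorphXn.
    by have := bound k; rewrite hr hc => h; exact: h.
  by rewrite ltcR; apply: le_lt_trans (ler_norm _) hn.
have hpw0 : pw @ \oo --> 0 := cvg_series_cvg_0 hcv.
have sS : forall k, series pw k.+1 = series pw k + pw k.
  by move=> k; rewrite /series /= big_nat_recr.
have s0 : series pw 0 = 0 by rewrite /series /= big_geq.
have left : forall k, m (one - d) (series pw k) = one - pw k.
  elim=> [|k IH]; first by rewrite s0 (bl_0r mDr) subrr.
  rewrite sS (bl_Dr mDr) IH (bl_Bl mDl) m1l.
  by rewrite addrA subrK.
have right : forall k, m (series pw k) (one - d) = one - pw k.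
  elim=> [|k IH]; first by rewrite s0 (bl_0l mDl) subrr.
  rewrite sS (bl_Dl mDl) IH (bl_Br mDr) m1r -pwS'.
  by rewrite addrA subrK.
have h2 : (fun k => one - pw k) @ \oo --> one.
  apply/cvgrPdist_lt => e e0; move/cvgrPdist_lt: hpw0 => /(_ e e0).
  by apply: filterS => k; rewrite sub0r normrN opprB addrCA subrr addr0.
exists (lim (series pw @ \oo)); split.
  have h1 := @mcontl (one - d) _ _ hcv.
  have e : (fun k => m (one - d) (series pw k)) = (fun k => one - pw k).
    by apply: funext => k; exact: left.
  rewrite e in h1.
  by rewrite -(cvg_lim (@norm_hausdorff _ V) h1) (cvg_lim (@norm_hausdorff _ V) h2).
have h1 := @mcontr (one - d) _ _ hcv.
have e : (fun k => m (series pw k) (one - d)) = (fun k => one - pw k).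
  by apply: funext => k; exact: right.
rewrite e in h1.
by rewrite -(cvg_lim (@norm_hausdorff _ V) h1) (cvg_lim (@norm_hausdorff _ V) h2).
Qed.
End Neumann.

End Aux3.
Import Aux3.

Module Aux4.
Import numFieldNormedType.Exports.
Local Open Scope ring_scope.
Local Open Scope classical_set_scope.

Section Ideal.
Variable R : realType.
Local Notation C := (complex R).
Variable V : completeNormedModType C.
Variables (m : V -> V -> V) (one : V).
Local Notation "x ⋆ y" := (m x y) (at level 40, left associativity).
Hypothesis mA : forall x y z, m x (m y z) = m (m x y) z.
Hypothesis mDl : forall (a : C) x y z, m (a *: x + y) z = a *: m x z + m y z.
Hypothesis mDr : forall (a : C) x y z, m z (a *: x + y) = a *: m z x + m z y.
Hypothesis m1l : forall x, m one x = x.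
Hypothesis m1r : forall x, m x one = x.
Hypothesis msub : forall x y, `|m x y| <= `|x| * `|y|.

Let mDl' := bl_Dl mDl. Let mDr' := bl_Dr mDr. Let mBl := bl_Bl mDl. Let mBr := bl_Br mDr.
Let m0l := bl_0l mDl. Let m0r := bl_0r mDr. Let mZl := bl_Zl mDl. Let mZr := bl_Zr mDr.

Lemma DI b : exists g g' c c', g ⋆ g' = one /\ g' ⋆ g = one /\
   c ⋆ c' = one /\ c' ⋆ c = one /\ b = g - c.
Proof.
set l : C := `|b| + 1.
have l0 : 0 < l := ltr_wpDl (normr_ge0 b) ltr01.
have ln0 : l != 0 by rewrite gt_eqF.
set d := - (l^-1 *: b).
have hd : `|d| < 1.
  rewrite normrN normrZ ger0_norm ?invr_ge0 ?ltW //.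
  by rewrite mulrC ltr_pdivrMr // mul1r /l ltrDl ltr01.
have [w [hw1 hw2]] := neumann mA mDl mDr m1l m1r msub hd.
exists (l *: (one - d)), (l^-1 *: w), (l *: one), (l^-1 *: one).
split; first by rewrite mZl mZr scalerA mulfV // scale1r hw1.
split; first by rewrite mZl mZr scalerA mulVf // scale1r hw2.
split; first by rewrite mZl mZr scalerA mulfV // scale1r m1r.
split; first by rewrite mZl mZr scalerA mulVf // scale1r m1r.
by rewrite scalerBr addrAC subrr add0r /d scalerN opprK scalerA mulfV // scale1r.
Qed.

Definition Iset : set V := fun y => exists w ws x z, ws ⋆ w = one /\
   y = x ⋆ (one - w ⋆ ws) ⋆ z.

Lemma I_add y1 y2 : Iset y1 -> Iset y2 -> Iset (y1 + y2).
Proof.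
move=> [w1 [ws1 [x1 [z1 [hw1 ->]]]]] [w2 [ws2 [x2 [z2 [hw2 ->]]]]].
set E1 := one - w1 ⋆ ws1; set E2 := one - w2 ⋆ ws2.
exists (w1 ⋆ w2), (ws2 ⋆ ws1), (x1 ⋆ E1 + x2 ⋆ E2 ⋆ ws1), (E1 ⋆ z1 + w1 ⋆ E2 ⋆ z2).
split; first by rewrite mA -(mA ws2 ws1 w1) hw1 m1r hw2.
set E3 := one - w1 ⋆ w2 ⋆ (ws2 ⋆ ws1).
have hE1w : E1 ⋆ w1 = 0 by rewrite /E1 mBl m1l -mA hw1 m1r subrr.
have hwE1 : ws1 ⋆ E1 = 0 by rewrite /E1 mBr m1r mA hw1 m1l subrr.
have fa : forall u, u ⋆ E1 ⋆ E3 = u ⋆ E1.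
  by move=> u; rewrite -mA /E3 mBr m1r !mA hE1w !m0l subr0.
have fb : forall u, u ⋆ E3 ⋆ E1 = u ⋆ E1.
  by move=> u; rewrite -mA /E3 mBl m1l -!mA hwE1 !m0r subr0.
have fc : forall u, u ⋆ E1 ⋆ E1 = u ⋆ E1.
  by move=> u; rewrite -mA {1}/E1 mBl m1l -mA hwE1 m0r subr0.
have fg : forall u, u ⋆ E2 ⋆ E2 = u ⋆ E2.
  move=> u; rewrite -mA {1}/E2 mBl m1l -mA.
  have -> : ws2 ⋆ E2 = 0 by rewrite /E2 mBr m1r mA hw2 m1l subrr.
  by rewrite m0r subr0.
have fd : forall u, u ⋆ ws1 ⋆ E3 ⋆ w1 = u ⋆ E2.
  move=> u; rewrite -!mA; congr (m u _).
  rewrite /E3 mBl m1l mBr hw1 !mA hw1 m1l -(mA (w2 ⋆ ws2) ws1 w1) hw1 m1r.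
  by [].
have fe : forall u, u ⋆ E1 ⋆ w1 = 0 by move=> u; rewrite -mA hE1w m0r.
have ff : forall u, u ⋆ ws1 ⋆ E1 = 0 by move=> u; rewrite -mA hwE1 m0r.
clearbody E1 E2 E3.
by rewrite !mDl' !mDr' !mA !fa !fb !fd !fe !ff !fc !fg !m0l !addr0 add0r.
Qed.

Lemma I_scale (a : C) y : Iset y -> Iset (a *: y).
Proof.
move=> [w [ws [x [z [hw ->]]]]]; exists w, ws, (a *: x), z; by split => //; rewrite !mZl.
Qed.

Lemma I_mull c y : Iset y -> Iset (c ⋆ y).
Proof.
move=> [w [ws [x [z [hw ->]]]]]; exists w, ws, (c ⋆ x), z; by split => //; rewrite !mA.
Qed.

Lemma I_mulr c y : Iset y -> Iset (y ⋆ c).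
Proof.
move=> [w [ws [x [z [hw ->]]]]]; exists w, ws, x, (z ⋆ c); by split => //; rewrite !mA.
Qed.

Definition Jset : set V := fun x => forall eps : C, 0 < eps ->
   exists y, Iset y /\ `|x - y| < eps.

Lemma J_of_I y : Iset y -> Jset y.
Proof. by move=> hy eps e0; exists y; split => //; rewrite subrr normr0. Qed.

Lemma I0 : Iset 0.
Proof.
exists one, one, 0, 0; split; first by rewrite m1l.
by rewrite m0r.
Qed.

Lemma J_closed_ideal : closed_ideal m Jset.
Proof.
split.
- exact: J_of_I I0.
- move=> x y hx hy eps e0.
  have e2 : 0 < eps / 2 by rewrite divr_gt0.
  have [a [ha hxa]] := hx _ e2; have [b [hb hyb]] := hy _ e2.
  exists (a + b); split; first exact: I_add.
  rewrite opprD addrACA; apply: le_lt_trans (ler_normD _ _) _.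
  by rewrite [eps]splitr; apply: ltrD.
- move=> c x hx eps e0.
  have k0 : 0 < `|c| + 1 := ltr_wpDl (normr_ge0 c) ltr01.
  have e1 : 0 < eps / (`|c| + 1) by rewrite divr_gt0.
  have [a [ha hxa]] := hx _ e1.
  exists (c *: a); split; first exact: I_scale.
  rewrite -scalerBr normrZ.
  apply: (@le_lt_trans _ _ ((`|c| + 1) * `|x - a|)).
    by rewrite ler_wpM2r // lerDl ler01.
  by rewrite mulrC -ltr_pdivlMr.
- move=> x y hy; split.
  + move=> eps e0.
    have k0 : 0 < `|x| + 1 := ltr_wpDl (normr_ge0 x) ltr01.
    have e1 : 0 < eps / (`|x| + 1) by rewrite divr_gt0.
    have [a [ha hya]] := hy _ e1.
    exists (x ⋆ a); split; first exact: I_mull.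
    rewrite -mBr; apply: le_lt_trans (msub _ _) _.
    apply: (@le_lt_trans _ _ ((`|x| + 1) * `|y - a|)).
      by rewrite ler_wpM2r // lerDl ler01.
    by rewrite mulrC -ltr_pdivlMr.
  + move=> eps e0.
    have k0 : 0 < `|x| + 1 := ltr_wpDl (normr_ge0 x) ltr01.
    have e1 : 0 < eps / (`|x| + 1) by rewrite divr_gt0.
    have [a [ha hya]] := hy _ e1.
    exists (a ⋆ x); split; first exact: I_mulr.
    rewrite -mBl; apply: le_lt_trans (msub _ _) _.
    apply: (@le_lt_trans _ _ (`|y - a| * (`|x| + 1))).
      by rewrite ler_wpM2l // lerDl ler01.
    by rewrite -ltr_pdivlMr.
- move=> p hp eps e0.
  have e2 : 0 < eps / 2 by rewrite divr_gt0.
  have [q [hq hpq]] := hp _ (nbhsx_ballx p (eps / 2) e2).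
  move: hpq; rewrite -ball_normE /ball_ /= => hpq.
  have [y [hy hqy]] := hq _ e2.
  exists y; split => //.
  have -> : p - y = (p - q) + (q - y) by rewrite addrA subrK.
  apply: le_lt_trans (ler_normD _ _) _.
  by rewrite [eps]splitr; apply: ltrD.
Qed.


Lemma st_exist : simple_alg m -> forall v vs, vs ⋆ v = one -> one - v ⋆ vs <> 0 ->
  exists s s' t t', s' ⋆ s = one /\ t' ⋆ t = one /\ s' ⋆ t = 0 /\ t' ⋆ s = 0.
Proof.
move=> hs v vs hv hne.
have hI1 : Iset one.
  case: (hs _ J_closed_ideal) => hJ.
    exfalso; apply: hne.
    have : Jset (one - v ⋆ vs).
      by apply: J_of_I; exists v, vs, one, one; rewrite m1l m1r.
    by rewrite hJ.
  have : Jset one by rewrite hJ.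
  move=> /(_ 1 ltr01) [y [hy h1]].
  have [w [hw1 hw2]] := neumann mA mDl mDr m1l m1r msub h1.
  move: hw2; rewrite opprB addrCA subrr addr0 => hw2.
  by have := I_mull w hy; rewrite hw2.
case: hI1 => w [ws [x [z [hw hone]]]].
set E := one - w ⋆ ws.
have hEw : E ⋆ w = 0 by rewrite /E mBl m1l -mA hw m1r subrr.
have hwE : ws ⋆ E = 0 by rewrite /E mBr m1r mA hw m1l subrr.
have hEE : E ⋆ E = E by rewrite {1}/E mBl m1l -mA hwE m0r subr0.
exists w, ws, (E ⋆ z), (x ⋆ E); split => //; split.
  by rewrite mA -(mA x E E) hEE.
split; first by rewrite mA hwE m0l.
by rewrite -mA hEw m0r.
Qed.
End Ideal.

End Aux4.
Import Aux4.

Unset Implicit Arguments.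
Set Strict Implicit.
Local Open Scope ring_scope.

Theorem theorem2p8 (R : realType)
  (VA VB : completeNormedModType (complex R))
  (mulA : VA -> VA -> VA) (starA : VA -> VA)
  (mulB : VB -> VB -> VB) (starB : VB -> VB)
  (hA : is_cstar_algebra mulA starA) (hB : is_cstar_algebra mulB starB)
  (one : VA) (hone : is_unit mulA one)
  (hsimple : simple_alg mulA) (hinf : infinite_alg mulA starA one)
  (T : VA -> VB) (hT : is_linear_map T) :
  star_hom mulA starA mulB starB T <-> star_hom_at mulA starA mulB starB T one.
Proof.
case: hA => mA [mDl [mDr [stD [stK [stM [msub _]]]]]].
case: hB => nA [nDl [nDr [sbD [sbK [sbM [_ ncs]]]]]].
have m1l : forall x, mulA one x = x := fun x => (hone x).1.
have m1r : forall x, mulA x one = x := fun x => (hone x).2.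
split.
  case=> _ [hM hS]; split.
    by move=> a b hab; rewrite hM hS; split => //; rewrite -hS -hM hab.
  by move=> c d hcd; rewrite hM hS; split => //; rewrite -hS -hM hcd.
case=> H1 H2.
pose S x := starB (T (starA x)).
have hS : forall (a : complex R) x y, S (a *: x + y) = a *: S x + S y.
  by move=> a x y; rewrite /S stD hT sbD conjCK.
have hP : forall x y, mulA x y = one -> mulB (T x) (S y) = T one.
  move=> x y hxy; have hxy' : mulA x (starA (starA y)) = one by rewrite stK.
  by have [_ h] := H1 x (starA y) hxy'; exact: h.
have hQ : forall x y, mulA x y = one -> mulB (S x) (T y) = T one.
  move=> x y hxy; have hxy' : mulA (starA (starA x)) y = one by rewrite stK.
  by have [_ h] := H2 (starA x) y hxy'; exact: h.
have [v [hv hne]] : exists v, mulA (starA v) v = one /\ mulA v (starA v) <> one.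
  apply: contrapT => hn; apply: hinf; rewrite /finite_proj => q _ _ [v [h1 h2]].
  rewrite -h2; apply: contrapT => h3; apply: hn; exists v; split => //.
have hne' : one - mulA v (starA v) <> 0.
  by move=> /subr0_eq h; apply: hne; rewrite h.
have [s [s' [t [t' [hss [htt [hst hts]]]]]]] :=
  st_exist mA mDl mDr m1l m1r msub hsimple hv hne'.
have hDI := DI mA mDl mDr m1l m1r msub.
have L1 := Lfinal mA mDl mDr m1l m1r nDl nDr hT hS hP hDI hss htt hst hts.
have st1 : starA one = one.
  by rewrite -{1}(m1l (starA one)) -{1}(stK one) -stM m1l stK.
have e0 : mulB (T one) (starB (T one)) = T one.
  by have := hP one one (m1l one); rewrite /S st1.
have sh : starB (T one) = T one by rewrite -{1}e0 sbM sbK e0.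
have hS1 : S one = T one by rewrite /S st1 sh.
have hQ' : forall x y, mulA x y = one -> mulB (S x) (T y) = S one.
  by move=> x y hxy; rewrite hS1; apply: hQ.
have L2 := Lfinal mA mDl mDr m1l m1r nDl nDr hS hT hQ' hDI hss htt hst hts.
have hh : mulB (T one) (T one) = T one by have := e0; rewrite sh.
have ha : forall a, mulB (T a) (T one) = mulB (T one) (S a).
  by move=> a; have := (L1 a one).1; rewrite hS1 m1r.
have hb : forall a, mulB (S a) (T one) = mulB (T one) (T a).
  by move=> a; have := (L2 a one).1; rewrite hS1 m1r.
have hc : forall a b, mulB (T a) (S b) = mulB (T (mulA a b)) (T one).
  by move=> a b; have := (L1 a b).2; rewrite hS1.
have he : forall a b, mulB (T (mulA a b)) (T one) = mulB (mulB (T a) (T one)) (T b).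
  by move=> a b; rewrite -nA -hb nA hc -nA hh.
have hf : forall c, mulB (T c) (T one) = mulB (T one) (T c).
  by move=> c; rewrite -{1}(m1l c) he hh.
have hp : forall a, mulB (mulB (T a) (T one)) (T one) = mulB (T a) (T one).
  by move=> a; rewrite -nA hh.
have hg : forall a b, mulB (T (mulA a b)) (T one) =
    mulB (mulB (T a) (T one)) (mulB (T b) (T one)).
  by move=> a b; rewrite he (hf b) nA hp.
have hstar : forall a, starB (mulB (T a) (T one)) = mulB (T (starA a)) (T one).
  by move=> a; rewrite sbM sh (ha (starA a)) /S stK.
have sbB := cj_B sbD.
have sb0 := cj_0 sbD.
have hsT : forall x, starB (T x) = S (starA x) by move=> x; rewrite /S stK.
have hD : forall a, T a = mulB (T a) (T one).
  move=> a.
  pose X := mulB (mulB (T a) (T one)) (mulB (T (starA a)) (T one)).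
  have k1 : mulB (T a) (S (starA a)) = X by rewrite hc hg.
  have k2 : mulB (T a) (mulB (T (starA a)) (T one)) =
      mulB (mulB (T a) (T one)) (S (starA a)) by rewrite (ha (starA a)) nA.
  have k3 : mulB (mulB (T a) (T one)) (S (starA a)) = X.
    by rewrite -{1}(hp a) -nA -(ha (starA a)).
  have hz : mulB (T a - mulB (T a) (T one)) (starB (T a - mulB (T a) (T one))) = 0.
    rewrite sbB hstar hsT (bl_Bl nDl) !(bl_Br nDr) k1 k2 k3.
    by rewrite /X !subrr.
  have := ncs (starB (T a - mulB (T a) (T one))).
  rewrite sbK hz normr0 => /esym /eqP; rewrite sqrf_eq0 normr_eq0 => /eqP h0.
  have : T a - mulB (T a) (T one) = 0 by rewrite -[LHS]sbK h0 sb0.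
  by move/subr0_eq.
split => //; split.
  by move=> a b; rewrite (hD (mulA a b)) hg -!hD.
by move=> a; have := hstar a; rewrite -!hD => ->.
Qed.
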